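(* Let $k\ge2$ be an integer, $\lambda=e^{2\pi i/k}$, and $a,b,c,d\in\mathbb{C}$. Suppose that for every $j\in\mathbb{N}$, both pairs $(x,y)=(a+\lambda^j d,\ c+\lambda^j b)$ and $(x,y)=(a+\lambda^j c,\ d+\lambda^j b)$ satisfy $x^k=y^k$ (these are the unary functions obtained by attaching the unary function $(1,\lambda^j)$ to either variable of $Q=\begin{pmatrix}a&c\\d&b\end{pmatrix}$). Then: If $k\ge3$, one of the following holds: (1) $a=b=c=d=0$; (2) $a=b=0$ and $c^k=d^k$; (3) $c=d=0$ and $a^k=b^k$; (4) none of $a,b,c,d$ is zero, $ab=cd$, and the ratio of any two of $a,b,c,d$ is a $k$-th root of unity. If $k=2$, one of the following holds: (1) $a=b=c=d=0$; (2) $a=b=0$ and $c^2=d^2$; (3) $c=d=0$ and $a^2=b^2$; (4) none of $a,b,c,d$ is zero, $b=a$ and $d=c$; (5) none of $a,b,c,d$ is zero, $b=-a$ and $d=-c$. *)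

(* Defs.v *)
From mathcomp Require Import all_boot all_order all_algebra.
From mathcomp Require Import all_classical all_reals all_analysis.
From mathcomp Require Export complex.
Import Order.TTheory GRing.Theory Num.Theory.
Local Open Scope ring_scope.
Local Open Scope complex_scope.

Definition root_lambda (R : realType) (k : nat) : R[i] :=
  ((cos (2 * pi / k%:R)) +i* (sin (2 * pi / k%:R)))%C.

(* Main.v *)
Require Import Defs.
From mathcomp Require Import all_boot all_order all_algebra.
From mathcomp Require Import all_classical all_reals all_analysis.
From mathcomp Require Import complex.
From mathcomp Require Import ring lra zify.
Import Order.TTheory GRing.Theory Num.Theory.
Local Open Scope ring_scope.

Lemma cis_exp (R : realType) (x : R) n :
  ((cos x +i* sin x)%C ^+ n) = (cos (x *+ n) +i* sin (x *+ n))%C.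
Proof.
elim: n => [|n IH]; first by rewrite expr0 mulr0n cos0 sin0.
rewrite exprS IH mulrS cosD sinD.
apply/eqP; rewrite eq_complex /=. apply/andP; split; apply/eqP; ring.
Qed.

Lemma lam_prim (R : realType) (k : nat) : (0 < k)%N -> k.-primitive_root (root_lambda R k).
Proof.
move=> k0.
have lamE t : root_lambda R k ^+ t = (cos ((pi / k%:R) *+ 2 *+ t) +i* sin ((pi / k%:R) *+ 2 *+ t))%C.
  rewrite /root_lambda cis_exp (_ : 2 * pi / k%:R = (pi / k%:R) *+ 2) //.
  by rewrite mulr2n; ring.
have kR : (k%:R : R) != 0 by rewrite pnatr_eq0 -lt0n.
apply/andP; split=> //; apply/forallP => i; apply/eqP/unity_rootP.
case: (ltnP i.+1 k) => hi.
  rewrite (_ : (i.+1 == k) = false); last by apply/negbTE; rewrite neq_ltn hi.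
  rewrite lamE => -[] + _.
  rewrite -mulrnA mulnC mulrnA cos_mulr2n.
  set y := (pi / k%:R) *+ i.+1.
  have ypos : 0 < sin y.
    apply: sin_gt0_pi; apply/andP; split.
      by rewrite /y pmulrn_rgt0 // divr_gt0 ?pi_gt0 // ltr0n.
    rewrite /y -mulr_natr -mulrA gtr_pMr ?pi_gt0 // mulrC ltr_pdivrMr ?ltr0n // mul1r ltr_nat //.
  move=> h; have : sin y ^+ 2 = 0 by rewrite sin2cos2; move: h; rewrite mulr2n; lra.
  by move/eqP; rewrite expf_eq0 /= (gt_eqF ypos).
have -> : i.+1 = k by apply/eqP; rewrite eqn_leq hi ltn_ord.
rewrite eqxx lamE -mulrnA mulnC mulrnA -[pi / k%:R *+ k]mulr_natr divfK // cos2pi sin2pi //.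
Qed.

Lemma geo_prim (F : idomainType) k (z : F) t : k.-primitive_root z ->
  \sum_(j < k) z ^+ (j * t) = if (k %| t)%N then k%:R else 0.
Proof.
move=> pz.
have e j : z ^+ (j * t) = (z ^+ t) ^+ j by rewrite mulnC exprM.
under eq_bigr do rewrite e.
rewrite (prim_order_dvd pz); case: eqP => [->|ne].
  by rewrite (eq_bigr (fun=> 1)) ?sumr_const ?card_ord // => j _; exact: expr1n.
have : (z ^+ t - 1) * \sum_(j < k) (z ^+ t) ^+ j = 0.
  by rewrite -subrX1 -exprM mulnC exprM (prim_expr_order pz) expr1n subrr.
by move/eqP; rewrite mulf_eq0 subr_eq0 => /orP [/eqP //|/eqP].
Qed.

Lemma dft (F : numFieldType) (k : nat) (z : F) (e : nat -> F) :
  (0 < k)%N -> k.-primitive_root z ->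
  (forall j, \sum_(i < k.+1) e i * z ^+ (j * i) = 0) ->
  (forall m, (0 < m < k)%N -> e m = 0) /\ e 0%N + e k = 0.
Proof.
move=> k0 pz H.
have kR : (k%:R : F) != 0 by rewrite pnatr_eq0 -lt0n.
have T m : (m < k)%N ->
   \sum_(i < k.+1) e i * (if (k %| (k - m + i))%N then k%:R else 0) = 0.
  move=> mk.
  have : \sum_(j < k) z ^+ (j * (k - m)) * \sum_(i < k.+1) e i * z ^+ (j * i) = 0.
    by apply: big1 => j _; rewrite H mulr0.
  under eq_bigr do rewrite mulr_sumr.
  rewrite exchange_big /= => h; rewrite -[RHS]h.
  apply: eq_bigr => i _; rewrite -(@geo_prim _ _ _ _ pz) mulr_sumr; apply: eq_bigr => j _.
  by rewrite mulrCA -exprD mulnDr.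
split.
  move=> m /andP [m0 mk]; have := T m mk.
  have mk1 : (m < k.+1)%N by lia.
  rewrite (bigD1 (Ordinal mk1)) //= big1.
    rewrite addr0 subnK ?dvdnn; last by lia.
    by move/eqP; rewrite mulf_eq0 (negbTE kR) orbF => /eqP.
  move=> i /eqP ne; rewrite ifF ?mulr0 //; apply/negP => dv.
  have ik : (i <= k)%N by have := ltn_ord i; lia.
  have : i <> m :> nat by move=> h; apply: ne; apply: val_inj.
  move: dv; rewrite /dvdn. move=> /eqP dv. have := divn_eq (k - m + i) k; rewrite dv addn0; set q := (_ %/ _)%N => hq.
  have [q0|[q1|q2]] : (q = 0 \/ q = 1 \/ 2 <= q)%N by lia.
  - by move: hq; rewrite q0; lia.
  - by move: hq; rewrite q1; lia.
  - have : (2 * k <= q * k)%N by rewrite leq_mul2r q2 orbT.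
    lia.
have := T 0%N k0.
rewrite (bigD1 ord0) //= (bigD1 ord_max) //=; last by rewrite -val_eqE /= -lt0n.
rewrite big1.
  rewrite addr0 subn0 addn0 dvdnn (_ : (k %| k + k)%N = true); last by apply: dvdn_add.
  by move/eqP; rewrite -mulrDl mulf_eq0 (negbTE kR) orbF => /eqP.
move=> i /andP [/eqP n0 /eqP nk]; rewrite ifF ?mulr0 //; apply/negP; rewrite subn0 => dv.
have ik : (i < k.+1)%N by apply ltn_ord.
have i0 : i <> 0%N :> nat by move=> h; apply: n0; apply: val_inj.
have ik' : i <> k :> nat by move=> h; apply: nk; apply: val_inj.
move: dv; rewrite /dvdn => /eqP dv.
have := divn_eq (k + i) k; rewrite dv addn0; set q := (_ %/ _)%N => hq.
have [q0|[q1|q2]] : (q = 0 \/ q = 1 \/ 2 <= q)%N by lia.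
- by move: hq; rewrite q0; lia.
- by move: hq; rewrite q1; lia.
- have : (2 * k <= q * k)%N by rewrite leq_mul2r q2 orbT.
  lia.
Qed.

Lemma term_eq (F : comRingType) (X Y U V Z : F) n :
  (X * Y - U * V) *+ n * Z = X * (Z * Y) *+ n - U * (Z * V) *+ n.
Proof. by rewrite -mulrnBl mulrnAl; congr (_ *+ _); ring. Qed.

Lemma coef_facts (F : numFieldType) k (z x y u v : F) : (0 < k)%N -> k.-primitive_root z ->
  (forall j, (x + z ^+ j * y) ^+ k = (u + z ^+ j * v) ^+ k) ->
  (forall m, (0 < m < k)%N -> x ^+ (k - m) * y ^+ m = u ^+ (k - m) * v ^+ m) /\
  x ^+ k + y ^+ k = u ^+ k + v ^+ k.
Proof.
move=> k0 pz H.
pose e i := (x ^+ (k - i) * y ^+ i - u ^+ (k - i) * v ^+ i) *+ 'C(k, i).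
have [h1 h2] : (forall m, (0 < m < k)%N -> e m = 0) /\ e 0%N + e k = 0.
  apply: dft k0 pz _ => j.
  have := H j; move/eqP; rewrite -subr_eq0 => /eqP h; rewrite -[RHS]h.
  rewrite !exprDn -sumrB; apply: eq_bigr => i _.
  rewrite /e !exprMn -exprM; exact: term_eq.
split.
  move=> m hm; have := h1 m hm; rewrite /e => /eqP.
  rewrite mulrn_eq0 subr_eq0 => /orP [/eqP C0|/eqP //].
  have : (m <= k)%N by case/andP: hm => _ /ltnW.
  by rewrite -bin_gt0 C0.
move: h2; rewrite /e subn0 subnn bin0 binn !expr0 !mulr1 !mul1r /= => /eqP.
by rewrite addrACA -opprD subr_eq0 => /eqP.
Qed.

Lemma alg_part (F : numFieldType) k (a b c d : F) : (2 <= k)%N ->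
  (forall m, (0 < m < k)%N -> a ^+ (k - m) * d ^+ m = c ^+ (k - m) * b ^+ m) ->
  a ^+ k + d ^+ k = c ^+ k + b ^+ k ->
  (forall m, (0 < m < k)%N -> a ^+ (k - m) * c ^+ m = d ^+ (k - m) * b ^+ m) ->
  a ^+ k + c ^+ k = d ^+ k + b ^+ k ->
  ((3 <= k)%N ->
     [\/ a = 0 /\ b = 0 /\ c = 0 /\ d = 0,
         a = 0 /\ b = 0 /\ c ^+ k = d ^+ k,
         c = 0 /\ d = 0 /\ a ^+ k = b ^+ k |
         [/\ [/\ a != 0, b != 0, c != 0 & d != 0], a * b = c * d &
            forall x y : F, x \in [:: a; b; c; d] -> y \in [:: a; b; c; d] ->
              (x / y) ^+ k = 1]]) /\
  (k = 2%N ->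
     (a = 0 /\ b = 0 /\ c = 0 /\ d = 0) \/
     (a = 0 /\ b = 0 /\ c ^+ 2 = d ^+ 2) \/
     (c = 0 /\ d = 0 /\ a ^+ 2 = b ^+ 2) \/
     [/\ [/\ a != 0, b != 0, c != 0 & d != 0], b = a & d = c] \/
     [/\ [/\ a != 0, b != 0, c != 0 & d != 0], b = - a & d = - c]).
Proof.
move=> k2 M1 S1 M2 S2.
have k0 : (0 < k)%N by lia.
have ck : c ^+ k = d ^+ k.
  have : (d ^+ k - c ^+ k) *+ 2 = 0.
    rewrite (_ : (d ^+ k - c ^+ k) *+ 2 = (a ^+ k + d ^+ k - (c ^+ k + b ^+ k)) - (a ^+ k + c ^+ k - (d ^+ k + b ^+ k))).
      by rewrite S1 S2 !subrr.
    rewrite mulr2n; ring.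
  by move/eqP; rewrite mulrn_eq0 /= subr_eq0 => /eqP.
have ak : a ^+ k = b ^+ k.
  apply/eqP; rewrite -subr_eq0; apply/eqP.
  rewrite (_ : a ^+ k - b ^+ k = a ^+ k + d ^+ k - (c ^+ k + b ^+ k)); first by rewrite S1 subrr.
  by rewrite ck; ring.
have m1 : (0 < 1 < k)%N by lia.
have E0 (x : F) : x ^+ k = 0 -> x = 0 by move/eqP; rewrite expf_eq0 => /andP [_ /eqP].
have Z0 (x : F) : x ^+ (k - 1) = 0 -> x = 0 by move/eqP; rewrite expf_eq0 => /andP [_ /eqP].
have Pk0 (x : F) : x = 0 -> x ^+ (k - 1) = 0 by move=> ->; rewrite expr0n; case: k k2 {M1 M2 S1 S2 ck ak m1 E0 Z0 k0} => [|[|n]].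
have caseAB : (a = 0 \/ b = 0) -> a = 0 /\ b = 0 /\ c ^+ k = d ^+ k.
  have bb : b = 0 -> a = 0 by move=> b0; apply: E0; rewrite ak b0 expr0n; by case: (k) k0.
  case=> [a0|b0]; last by split; [exact: bb|].
  have h1 := M1 1%N m1; have h2 := M2 1%N m1.
  rewrite (Pk0 a a0) mul0r expr1 in h1; rewrite (Pk0 a a0) mul0r expr1 in h2.
  case: (eqVneq b 0) => [b0|bn0]; first by [].
  have c0 : c = 0 by apply: Z0; apply/eqP; move/esym/eqP: h1; rewrite mulf_eq0 (negbTE bn0) orbF.
  have d0 : d = 0 by apply: Z0; apply/eqP; move/esym/eqP: h2; rewrite mulf_eq0 (negbTE bn0) orbF.
  exfalso; move/eqP: bn0; apply; apply: E0; rewrite -ak a0 expr0n; by case: (k) k0.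
have caseCD : (c = 0 \/ d = 0) -> c = 0 /\ d = 0 /\ a ^+ k = b ^+ k.
  case=> [c0|d0].
    by split=> //; split=> //; apply: E0; rewrite -ck c0 expr0n; by case: (k) k0.
  by split=> //; apply: E0; rewrite ck d0 expr0n; by case: (k) k0.
have [a0|an0] := eqVneq a 0.
  have [A0 [B0 C0]] := caseAB (or_introl a0).
  by split=> [_|k2']; [apply: Or42 | right; left; subst k].
have [b0|bn0] := eqVneq b 0.
  have [A0 [B0 C0]] := caseAB (or_intror b0).
  by split=> [_|k2']; [apply: Or42 | right; left; subst k].
have [c0|cn0] := eqVneq c 0.
  have [A0 [B0 C0]] := caseCD (or_introl c0).
  by split=> [_|k2']; [apply: Or43 | right; right; left; subst k].
have [d0|dn0] := eqVneq d 0.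
  have [A0 [B0 C0]] := caseCD (or_intror d0).
  by split=> [_|k2']; [apply: Or43 | right; right; left; subst k].
have nz : [/\ a != 0, b != 0, c != 0 & d != 0] by [].
split=> [k3|k2'].
  apply: Or44; case: k k2 M1 S1 M2 S2 k0 ck ak m1 E0 Z0 Pk0 caseAB caseCD k3 => [|[|[|n]]] //.
  move=> _ M1 _ _ _ _ ck ak _ _ _ _ _ _ _.
  have h1 := M1 1%N isT; have h2 := M1 2%N isT.
  rewrite (_ : (n.+3 - 1 = n.+2)%N) // (_ : (n.+3 - 2 = n.+1)%N) // in h1 h2.
  have abcd : a * b = c * d.
    have : a ^+ n.+1 * c ^+ n.+1 * b * d * (a * b - c * d) = 0.
      rewrite (_ : a ^+ n.+1 * c ^+ n.+1 * b * d * (a * b - c * d) =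
         (a ^+ n.+2 * d ^+ 1) * (c ^+ n.+1 * b ^+ 2) - (c ^+ n.+2 * b ^+ 1) * (a ^+ n.+1 * d ^+ 2)).
        by rewrite h1 h2 subrr.
      rewrite !exprS !expr0; ring.
    move/eqP; rewrite !mulf_eq0 !expf_eq0 (negbTE an0) (negbTE bn0) (negbTE cn0) (negbTE dn0) !andbF /=.
    by rewrite subr_eq0 => /eqP.
  have ac : a ^+ n.+3 = c ^+ n.+3.
    apply: (mulIf dn0).
    transitivity (a * (a ^+ n.+2 * d ^+ 1)); first by rewrite expr1 exprS mulrA.
    by rewrite h1 expr1 mulrCA abcd mulrA -exprSr.
  split=> // x y.
  have P (w : F) : w \in [:: a; b; c; d] -> w ^+ n.+3 = a ^+ n.+3.
    rewrite !inE => /or4P [] /eqP ->; [by [] | by rewrite ak | by rewrite ac | by rewrite ac ck].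
  move=> /P px /P py; rewrite exprMn exprVn px py divff // expf_eq0 (negbTE an0) andbF //.
subst k.
have h1 := M1 1%N isT; have h2 := M2 1%N isT.
rewrite /= !expr1 in h1 h2.
have : c * d * (a - b) * (a + b) = 0.
  rewrite (_ : c * d * (a - b) * (a + b) = (a * d) * (a * c) - (c * b) * (d * b)); last by ring.
  by rewrite h1 h2 mulrC subrr.
move/eqP; rewrite !mulf_eq0 (negbTE cn0) (negbTE dn0) /= subr_eq0 addr_eq0 => /orP [] /eqP ba.
  right; right; right; left; split=> //; apply: (mulfI an0); rewrite h1 -ba mulrC //.
right; right; right; right; split=> //.
  by rewrite ba opprK.
apply: (mulfI an0); rewrite h1 ba mulrC mulrN mulNr opprK //.
Qed.

Theorem mainTheorem15 (R : realType) (k : nat) (a b c d : R[i]) :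
  (2 <= k)%N ->
  (forall j : nat,
      (a + (root_lambda R k) ^+ j * d) ^+ k = (c + (root_lambda R k) ^+ j * b) ^+ k /\
      (a + (root_lambda R k) ^+ j * c) ^+ k = (d + (root_lambda R k) ^+ j * b) ^+ k) ->
  ((3 <= k)%N ->
     [\/ a = 0 /\ b = 0 /\ c = 0 /\ d = 0,
         a = 0 /\ b = 0 /\ c ^+ k = d ^+ k,
         c = 0 /\ d = 0 /\ a ^+ k = b ^+ k |
         [/\ [/\ a != 0, b != 0, c != 0 & d != 0], a * b = c * d &
            forall x y : R[i], x \in [:: a; b; c; d] -> y \in [:: a; b; c; d] ->
              (x / y) ^+ k = 1]]) /\
  (k = 2%N ->
     (a = 0 /\ b = 0 /\ c = 0 /\ d = 0) \/
     (a = 0 /\ b = 0 /\ c ^+ 2 = d ^+ 2) \/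
     (c = 0 /\ d = 0 /\ a ^+ 2 = b ^+ 2) \/
     [/\ [/\ a != 0, b != 0, c != 0 & d != 0], b = a & d = c] \/
     [/\ [/\ a != 0, b != 0, c != 0 & d != 0], b = - a & d = - c]).
Proof.
move=> k2 H.
have k0 : (0 < k)%N by apply: leq_trans k2.
have pz := lam_prim R k k0.
have [M1 S1] := coef_facts _ _ _ _ _ _ _ k0 pz (fun j => (H j).1).
have [M2 S2] := coef_facts _ _ _ _ _ _ _ k0 pz (fun j => (H j).2).
exact: alg_part.
Qed.
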